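(* Let $R$ be a localizable partially ordered commutative ring. Then the extended Gelfand transformation $\widehat{\cdot}\colon R\to\mathscr{C}_\approx(\mathcal{D}_{\mathrm{loc}}(R))$ is a positive ring morphism.
   Context: Rings are commutative with unit; ring morphisms are unital. A partially ordered commutative ring is a commutative ring $R$ with partial order $\le$, $r\le s\Rightarrow r+t\le s+t$, positive cone $R^+$ closed under multiplication and containing all squares. $\mathbb{N}_0=\{0,1,2,\dots\}$. $\mathrm{Loc}(R)$ is the set of $s\in1+R^+$ such that $rs\in R^+$ implies $r\in R^+$ for all $r\in R$; $R$ is localizable if every $r$ satisfies $-s\le r\le s$ for some $s\in\mathrm{Loc}(R)$. A ring morphism is positive if it maps positive elements to positive elements. Admissible domains on a space $Y$: a set $\mathcal{D}$ of open subsets with $Y\in\mathcal{D}$, closed under pairwise intersections. $\mathscr{C}_\approx(\mathcal{D})$: functions in $\bigcup_{A\in\mathcal{D}}\mathscr{C}(A)$ with pointwise operations on $\operatorname{dom}f\cap\operatorname{dom}g$, modulo $f\approx g$ iff $f|_A=g|_A$ for some $A\in\mathcal{D}$, $A\subseteq\operatorname{dom}f\cap\operatorname{dom}g$; ordered by $[f]\le[g]$ iff $f|_A\le g|_A$ for some such $A$. $R_{\mathrm{loc}}$: fractions $r/s$ ($r\in R$, $s\in\mathrm{Loc}(R)$), $r/s=r'/s'$ iff $rs'=r's$, usual operations, $p/q\le r/s$ iff $ps\le rq$. $R^{\mathrm{bd}}_{\mathrm{loc}}=\{a:\exists n\in\mathbb{N}_0,\ -n\le a\le n\}$. $\mathcal{K}(R)$: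 ring morphisms $\varphi\colon R^{\mathrm{bd}}_{\mathrm{loc}}\to\mathbb{R}$ with $\varphi(a)\ge0$ for $a\ge0$, weak-$*$ topology. $\mathrm{O}_{s<\infty}=\{\varphi:\varphi(1/s)>0\}$, $\mathcal{D}_{\mathrm{loc}}(R)=\{\mathrm{O}_{s<\infty}:s\in\mathrm{Loc}(R)\}$ (admissible). The extended Gelfand transformation sends $r\in R$ to the class $\widehat r$ of $r_s\colon\mathrm{O}_{s<\infty}\to\mathbb{R}$, $\varphi\mapsto\varphi(1/s)^{-1}\varphi(r/s)$, for any $s\in\mathrm{Loc}(R)$ with $r/s\in R^{\mathrm{bd}}_{\mathrm{loc}}$ (independent of $s$). *)

(* Defs.v *)
From HB Require Import structures.
From mathcomp Require Import all_boot all_order all_algebra.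
From mathcomp Require Import reals.
From Stdlib Require Import ClassicalEpsilon.
Set Implicit Arguments. Unset Strict Implicit. Unset Printing Implicit Defensive.
Import Order.TTheory GRing.Theory Num.Theory.
Local Open Scope ring_scope.

Section POCR.
Variables (R : comPzRingType) (le : R -> R -> Prop).

Definition pocr : Prop :=
  (forall r, le r r) /\
  (forall r s, le r s -> le s r -> r = s) /\
  (forall r s t, le r s -> le s t -> le r t) /\
  (forall r s t, le r s -> le (r + t) (s + t)) /\
  (forall r s, le 0 r -> le 0 s -> le 0 (r * s)) /\
  (forall r, le 0 (r * r)).

Definition is_loc (s : R) : Prop :=
  le 0 (s - 1) /\ (forall r, le 0 (r * s) -> le 0 r).

Definition localizable : Prop :=
  forall r, exists s, is_loc s /\ le (- s) r /\ le r s.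

(* Fractions r/s are represented by pairs (r, s) with s \in Loc(R). *)
Definition frac_eq (a b : R * R) : Prop := a.1 * b.2 = b.1 * a.2.
Definition frac_le (a b : R * R) : Prop := le (a.1 * b.2) (b.1 * a.2).
Definition frac_add (a b : R * R) : R * R := (a.1 * b.2 + b.1 * a.2, a.2 * b.2).
Definition frac_mul (a b : R * R) : R * R := (a.1 * b.1, a.2 * b.2).
Definition frac_one : R * R := (1, 1).

Definition frac_bd (a : R * R) : Prop :=
  is_loc a.2 /\
  exists n : nat, frac_le (- (n%:R), 1) a /\ frac_le a (n%:R, 1).

Variable RR : realType.

(* K(R): positive ring morphisms R^bd_loc -> RR, represented as functions on
   pairs, respecting equality of fractions, normalized to 0 on pairs that
   do not represent an element of R^bd_loc. *)
Definition is_char (phi : R * R -> RR) : Prop :=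
  (forall a, ~ frac_bd a -> phi a = 0) /\
  (forall a b, frac_bd a -> frac_bd b -> frac_eq a b -> phi a = phi b) /\
  (forall a b, frac_bd a -> frac_bd b -> phi (frac_add a b) = phi a + phi b) /\
  (forall a b, frac_bd a -> frac_bd b -> phi (frac_mul a b) = phi a * phi b) /\
  phi frac_one = 1 /\
  (forall a, frac_bd a -> frac_le (0, 1) a -> 0 <= phi a).

Definition kset := (R * R -> RR) -> Prop.

Definition near_in (phi psi : R * R -> RR) (l : seq (R * R)) (e : RR) : Prop :=
  forall a, List.In a l -> `|psi a - phi a| < e.

Definition continuous_on (A : kset) (f : (R * R -> RR) -> RR) : Prop :=
  forall phi, A phi -> forall e : RR, 0 < e ->
    exists (l : seq (R * R)) (d : RR), 0 < d /\
      forall psi, A psi -> near_in phi psi l d -> `|f psi - f phi| < e.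

Definition Oset (s : R) : kset := fun phi => is_char phi /\ 0 < phi (1, s).

Definition in_Dloc (A : kset) : Prop :=
  exists s, is_loc s /\ forall phi, A phi <-> Oset s phi.

Record dfun := DFun { ddom : kset; dval : (R * R -> RR) -> RR }.

Definition in_C (f : dfun) : Prop := in_Dloc (ddom f) /\ continuous_on (ddom f) (dval f).

Definition dadd (f g : dfun) : dfun :=
  DFun (fun phi => ddom f phi /\ ddom g phi) (fun phi => dval f phi + dval g phi).
Definition dmul (f g : dfun) : dfun :=
  DFun (fun phi => ddom f phi /\ ddom g phi) (fun phi => dval f phi * dval g phi).
Definition dunit : dfun := DFun is_char (fun _ => 1).
Definition dzero : dfun := DFun is_char (fun _ => 0).

Definition approx (f g : dfun) : Prop :=
  exists C, in_Dloc C /\ (forall phi, C phi -> ddom f phi /\ ddom g phi) /\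
    (forall phi, C phi -> dval f phi = dval g phi).

Definition dle (f g : dfun) : Prop :=
  exists C, in_Dloc C /\ (forall phi, C phi -> ddom f phi /\ ddom g phi) /\
    (forall phi, C phi -> dval f phi <= dval g phi).

Definition gelf_rep (r s : R) : dfun :=
  DFun (Oset s) (fun phi => (phi (1, s))^-1 * phi (r, s)).

(* a chosen s \in Loc(R) with r/s \in R^bd_loc (exists if R is localizable) *)
Definition gelf_s (r : R) : R := epsilon (inhabits 0) (fun s => frac_bd (r, s)).

(* extended Gelfand transformation (a representative of the class) *)
Definition gelfand (r : R) : dfun := gelf_rep r (gelf_s r).

Definition pos_rmorph_C (h : R -> dfun) : Prop :=
  (forall r, in_C (h r)) /\
  approx (h 1) dunit /\
  (forall r r', approx (h (r + r')) (dadd (h r) (h r'))) /\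
  (forall r r', approx (h (r * r')) (dmul (h r) (h r'))) /\
  (forall r, le 0 r -> dle dzero (h r)).

End POCR.

(* Main.v *)
Require Import Defs.
From HB Require Import structures.
From mathcomp Require Import all_boot all_order all_algebra.
From mathcomp Require Import reals.
From mathcomp Require Import ring lra.
From Stdlib Require Import ClassicalEpsilon.
Set Implicit Arguments. Unset Strict Implicit. Unset Printing Implicit Defensive.
Import Order.TTheory GRing.Theory Num.Theory.
Local Open Scope ring_scope.

Lemma leP' (R : comPzRingType) (le : R -> R -> Prop) : pocr le ->
  forall a b, le a b <-> le 0 (b - a).
Proof.
move=> [rf [an [tr [ad _]]]] a b; split=> h.
  by have := ad _ _ (- a) h; rewrite subrr.
by have := ad _ _ a h; rewrite add0r subrK.
Qed.

Lemma P_add (R : comPzRingType) (le : R -> R -> Prop) : pocr le ->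
  forall a b, le 0 a -> le 0 b -> le 0 (a + b).
Proof.
move=> [rf [an [tr [ad _]]]] a b ha hb.
apply: tr hb _; have := ad _ _ b ha; by rewrite add0r.
Qed.

Lemma P_mul (R : comPzRingType) (le : R -> R -> Prop) : pocr le ->
  forall a b, le 0 a -> le 0 b -> le 0 (a * b).
Proof. by move=> [_ [_ [_ [_ [m _]]]]]. Qed.

Lemma P_one (R : comPzRingType) (le : R -> R -> Prop) : pocr le -> le 0 (1 : R).
Proof. by move=> [_ [_ [_ [_ [_ sq]]]]]; have := sq 1; rewrite mulr1. Qed.

Lemma P_zero (R : comPzRingType) (le : R -> R -> Prop) : pocr le -> le 0 (0 : R).
Proof. by move=> [rf _]. Qed.

Lemma P_nat (R : comPzRingType) (le : R -> R -> Prop) : pocr le ->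
  forall n : nat, le 0 (n%:R : R).
Proof.
move=> H; elim=> [|n IH]; first exact: (P_zero H).
by rewrite mulrS; apply: (P_add H) => //; apply: (P_one H).
Qed.

Lemma P_loc (R : comPzRingType) (le : R -> R -> Prop) : pocr le ->
  forall s, is_loc le s -> le 0 s.
Proof.
move=> H s [h1 _]; rewrite -(subrK 1 s); apply: (P_add H) => //; exact: (P_one H).
Qed.

Lemma loc_mul (R : comPzRingType) (le : R -> R -> Prop) : pocr le ->
  forall s u, is_loc le s -> is_loc le u -> is_loc le (s * u).
Proof.
move=> H s u [hs cs] [hu cu]; split.
  have -> : s * u - 1 = (s - 1) * (u - 1) + (s - 1) + (u - 1) by ring.
  apply: (P_add H) => //; apply: (P_add H) => //; exact: (P_mul H).
move=> r h; apply: cs; apply: cu; by rewrite -mulrA.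
Qed.

Lemma mk_bd (R : comPzRingType) (le : R -> R -> Prop) : pocr le ->
  forall a1 a2 (n : nat), is_loc le a2 -> le 0 (a1 + n%:R * a2) ->
    le 0 (n%:R * a2 - a1) -> frac_bd le (a1, a2).
Proof.
move=> H a1 a2 n hl h1 h2; split => //; exists n; split; rewrite /frac_le /=;
  apply/(leP' H).
  by have -> : a1 * 1 - - n%:R * a2 = a1 + n%:R * a2 by ring.
by have -> : n%:R * a2 - a1 * 1 = n%:R * a2 - a1 by ring.
Qed.

Lemma bd_inv (R : comPzRingType) (le : R -> R -> Prop) : pocr le ->
  forall a1 a2, frac_bd le (a1, a2) -> is_loc le a2 /\
    exists n : nat, le 0 (a1 + n%:R * a2) /\ le 0 (n%:R * a2 - a1).
Proof.
move=> H a1 a2 [hl [n [h1 h2]]]; split => //; exists n; split.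
  move: h1; rewrite /frac_le /= (leP' H).
  by have -> : a1 * 1 - - n%:R * a2 = a1 + n%:R * a2 by ring.
move: h2; rewrite /frac_le /= (leP' H).
by have -> : n%:R * a2 - a1 * 1 = n%:R * a2 - a1 by ring.
Qed.

Lemma bd_one_loc (R : comPzRingType) (le : R -> R -> Prop) : pocr le ->
  forall u, is_loc le u -> frac_bd le (1, u).
Proof.
move=> H u hu; apply: (mk_bd H (n := 1)) => //.
  apply: (P_add H) => //; first exact: (P_one H).
  by rewrite mul1r; apply: (P_loc H).
by rewrite mul1r; case: hu.
Qed.

Lemma loc_one (R : comPzRingType) (le : R -> R -> Prop) : pocr le ->
  is_loc le (1 : R).
Proof. by move=> H; split; [rewrite subrr; apply: (P_zero H) | move=> r; rewrite mulr1]. Qed.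

Lemma bd_tt (R : comPzRingType) (le : R -> R -> Prop) : pocr le ->
  forall t, is_loc le t -> frac_bd le (t, t).
Proof.
move=> H t ht; apply: (mk_bd H (n := 1)) => //.
  by rewrite mul1r; apply: (P_add H); apply: (P_loc H).
by rewrite mul1r subrr; apply: (P_zero H).
Qed.

Lemma bd_mul (R : comPzRingType) (le : R -> R -> Prop) : pocr le ->
  forall a1 a2 b1 b2, frac_bd le (a1, a2) -> frac_bd le (b1, b2) ->
  frac_bd le (a1 * b1, a2 * b2).
Proof.
move=> H a1 a2 b1 b2 ha hb.
have [la [n [ha1 ha2]]] := bd_inv H ha.
have [lb [m [hb1 hb2]]] := bd_inv H hb.
have PX : le 0 (n%:R * a2) by apply: (P_mul H) => //; [apply: (P_nat H) | apply: (P_loc H)].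
have PY : le 0 (m%:R * b2) by apply: (P_mul H) => //; [apply: (P_nat H) | apply: (P_loc H)].
apply: (mk_bd H (n := 3 * n * m)); first exact: loc_mul.
  have -> : a1 * b1 + (3 * n * m)%:R * (a2 * b2) =
    (a1 + n%:R * a2) * (b1 + m%:R * b2) + (n%:R * a2) * (m%:R * b2 - b1)
    + (m%:R * b2) * (n%:R * a2 - a1) by rewrite !natrM; ring.
  by apply: (P_add H) => //; [apply: (P_add H) => //|]; apply: (P_mul H).
have -> : (3 * n * m)%:R * (a2 * b2) - a1 * b1 =
  (n%:R * a2 - a1) * (b1 + m%:R * b2) + (n%:R * a2) * (m%:R * b2 - b1)
  + (m%:R * b2) * (a1 + n%:R * a2) by rewrite !natrM; ring.
by apply: (P_add H) => //; [apply: (P_add H) => //|]; apply: (P_mul H).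
Qed.

Lemma bd_ext (R : comPzRingType) (le : R -> R -> Prop) : pocr le ->
  forall r s u t, frac_bd le (r, s) -> is_loc le u -> s * u = t -> frac_bd le (r, t).
Proof.
move=> H r s u t hb hu <-.
by have := bd_mul H hb (bd_one_loc H hu); rewrite mulr1.
Qed.

Section Char.
Lemma ch_pos1 (R : comPzRingType) (le : R -> R -> Prop) (RR : realType)
  (phi : R * R -> RR) : pocr le -> is_char le phi ->
  forall s, is_loc le s -> 0 <= phi (1, s).
Proof.
move=> H [_ [_ [_ [_ [_ cp]]]]] s hs; apply: cp; first exact: bd_one_loc.
rewrite /frac_le /= mul0r mulr1; exact: (P_one H).
Qed.

Lemma chM (R : comPzRingType) (le : R -> R -> Prop) (RR : realType)
  (phi : R * R -> RR) : is_char le phi ->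
  forall x s y u, frac_bd le (x, s) -> frac_bd le (y, u) ->
  phi (x * y, s * u) = phi (x, s) * phi (y, u).
Proof. by move=> [_ [_ [_ [cm _]]]] x s y u h1 h2; exact: (cm _ _ h1 h2). Qed.

Lemma ch_split (R : comPzRingType) (le : R -> R -> Prop) (RR : realType)
  (phi : R * R -> RR) : pocr le -> is_char le phi ->
  forall s u, is_loc le s -> is_loc le u -> 0 < phi (1, s * u) ->
  0 < phi (1, s) /\ 0 < phi (1, u).
Proof.
move=> H hc s u hs hu hp.
have E : phi (1, s * u) = phi (1, s) * phi (1, u).
  by rewrite -(chM hc (bd_one_loc H hs) (bd_one_loc H hu)) mulr1.
have p1 := ch_pos1 H hc hs; have p2 := ch_pos1 H hc hu.
rewrite E in hp; split; rewrite lt_def; apply/andP; split => //;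
  apply/eqP => Z; move: hp; rewrite Z ?mul0r ?mulr0 ltxx; done.
Qed.

Lemma ch_change (R : comPzRingType) (le : R -> R -> Prop) (RR : realType)
  (phi : R * R -> RR) : pocr le -> is_char le phi ->
  forall r s u t, frac_bd le (r, s) -> is_loc le u -> s * u = t ->
  0 < phi (1, t) ->
  (phi (1, s))^-1 * phi (r, s) = (phi (1, t))^-1 * phi (r, t).
Proof.
move=> H hc r s u t hb hu Et hp.
have hs : is_loc le s by case: hb.
rewrite -Et in hp *.
have [p1 p2] := ch_split H hc hs hu hp.
have E1 : phi (1, s * u) = phi (1, s) * phi (1, u).
  by rewrite -(chM hc (bd_one_loc H hs) (bd_one_loc H hu)) mulr1.
have E2 : phi (r, s * u) = phi (r, s) * phi (1, u).
  by rewrite -(chM hc hb (bd_one_loc H hu)) mulr1.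
rewrite E1 E2; field.
by apply/andP; split; rewrite gt_eqF.
Qed.

Lemma ch_add (R : comPzRingType) (le : R -> R -> Prop) (RR : realType)
  (phi : R * R -> RR) : pocr le -> is_char le phi ->
  forall r r' t, frac_bd le (r, t) -> frac_bd le (r', t) -> frac_bd le (r + r', t) ->
  phi (r + r', t) = phi (r, t) + phi (r', t).
Proof.
move=> H hc r r' t h1 h2 h3.
have ht : is_loc le t by case: h1.
have [_ [ceq [cadd [cmul [c1 _]]]]] := hc.
rewrite -(cadd _ _ h1 h2).
rewrite (_ : frac_add (r, t) (r', t) = ((r + r') * t, t * t)); last first.
  by rewrite /frac_add /=; congr pair; ring.
rewrite (chM hc h3 (bd_tt H ht)).
rewrite (ceq (t, t) (frac_one R) (bd_tt H ht)) ?c1 ?mulr1 //.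
  by apply: (bd_one_loc H); apply: loc_one.
by rewrite /frac_eq /= mulr1 mul1r.
Qed.
End Char.

Lemma gelf_s_bd (R : comPzRingType) (le : R -> R -> Prop) : pocr le -> localizable le ->
  forall r, frac_bd le (r, gelf_s le r).
Proof.
move=> H L r; rewrite /gelf_s; apply: (epsilon_spec (inhabits 0) (fun s => frac_bd le (r, s))).
have [s [hs [h1 h2]]] := L r; exists s.
apply: (mk_bd H (n := 1)) => //.
  by move: h1; rewrite (leP' H) mul1r opprK.
by move: h2; rewrite (leP' H) mul1r.
Qed.

Lemma cont_key (RR : realType) (a x e d A B U : RR) : 0 < a -> 0 < e -> 0 <= A ->
  0 <= U -> 0 <= B -> A < d -> U < d -> d * (a + B) <= e * a * a / 4%:R ->
  a / 2%:R < x -> a * A + B * U < e * (a * x).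
Proof.
intros.
have h1 : a*A <= a*d by rewrite ler_pM2l // ltW.
have h2 : B*U <= B*d by rewrite ler_wpM2l // ltW.
have h3 : e*a*(a/2%:R) < e*a*x by rewrite ltr_pM2l // mulr_gt0.
nra.
Qed.

Theorem proposition26 (R : comPzRingType) (le : R -> R -> Prop) (RR : realType) :
  pocr le -> localizable le -> @pos_rmorph_C R le RR (@gelfand R le RR).
Proof.
move=> H L.
have GB := gelf_s_bd H L.
have GL : forall r, is_loc le (gelf_s le r) by move=> r; case: (GB r).
split; [|split; [|split; [|split]]].
-
  move=> r; rewrite /gelfand /gelf_rep /in_C /=.
  set s := gelf_s le r.
  split; first by exists s; split; [first [done | exact: GL] | move=> ?; split].
  move=> phi [hc hp] e e0.
  set a := phi (1, s); set b := phi (r, s).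
  set d2 := e * a * a / (4%:R * (a + `|b|)).
  have ab0 : 0 < a + `|b| by apply: ltr_wpDr.
  have d20 : 0 < d2 by rewrite /d2; apply: divr_gt0; [rewrite !mulr_gt0 | rewrite mulr_gt0].
  have a20 : 0 < a / 2%:R by rewrite divr_gt0.
  exists [:: (1, s); (r, s)], (Num.min (a / 2%:R) d2); split.
    by rewrite lt_min a20 d20.
  move=> psi [hc' hp'] Hn.
  have Hx := Hn (1, s) (or_introl erefl).
  have Hy := Hn (r, s) (or_intror (or_introl erefl)).
  rewrite -/a in Hx; rewrite -/b in Hy.
  set x := psi (1, s) in Hx hp' *; set y := psi (r, s) in Hy *.
  set d := Num.min (a / 2%:R) d2 in Hx Hy.
  have dle1 : d <= a / 2%:R by rewrite /d ge_min lexx.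
  have dle2 : d <= d2 by rewrite /d ge_min lexx orbT.
  have xa : a / 2%:R < x.
    move: Hx; rewrite ltr_norml => /andP [h _].
    have : a / 2%:R = a - a / 2%:R by field.
    lra.
  have x0 : 0 < x by apply: lt_trans xa.
  have a0 : 0 < a by exact: hp.
  have -> : x^-1 * y - a^-1 * b = (a * (y - b) - b * (x - a)) / (a * x).
    by field; apply/andP; split; rewrite gt_eqF.
  rewrite normrM normfV (gtr0_norm (mulr_gt0 a0 x0)) ltr_pdivrMr ?mulr_gt0 //.
  apply: le_lt_trans (ler_normB _ _) _.
  rewrite !normrM (gtr0_norm a0).
  apply: (@cont_key _ a x e d) => //.
  have E2 : d2 * (a + `|b|) = e * a * a / 4%:R.
    rewrite /d2; field; exact: lt0r_neq0.
  rewrite -E2; apply: ler_wpM2r => //; exact: ltW.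
-
  rewrite /gelfand /gelf_rep /approx /=; set s := gelf_s le 1.
  exists (Oset le s); split; first by exists s; split; [first [done | exact: GL] | move=> ?; split].
  split; first by move=> phi hp; split => //; case: hp.
  by move=> phi [hc hp]; rewrite mulVf // gt_eqF.
-
  move=> r r'; rewrite /gelfand /gelf_rep /approx /=.
  set s := gelf_s le r; set s' := gelf_s le r'; set s'' := gelf_s le (r + r').
  have ls : is_loc le s by exact: GL. have ls' : is_loc le s' by exact: GL.
  have ls'' : is_loc le s'' by exact: GL.
  set t := s * (s' * s'').
  have lt : is_loc le t by apply: (loc_mul H) => //; apply: (loc_mul H).
  exists (Oset le t); split; first by exists t; split; [first [done | exact: GL] | move=> ?; split].
  have E1 : s * (s' * s'') = t by [].
  have E2 : s' * (s * s'') = t by rewrite /t; ring.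
  have E3 : s'' * (s * s') = t by rewrite /t; ring.
  have l1 : is_loc le (s' * s'') by apply: (loc_mul H).
  have l2 : is_loc le (s * s'') by apply: (loc_mul H).
  have l3 : is_loc le (s * s') by apply: (loc_mul H).
  have pos : forall phi : R * R -> RR, Oset le t phi ->
    [/\ 0 < phi (1, s), 0 < phi (1, s') & 0 < phi (1, s'')].
    move=> phi [hc hp].
    have [p1 p23] := ch_split H hc ls l1 hp.
    have [p2 p3] := ch_split H hc ls' ls'' p23.
    by split.
  split.
    move=> phi hp; have [p1 p2 p3] := pos _ hp; case: hp => hc _; by split; [split|split; split].
  move=> phi hp; have hc : is_char le phi by case: hp.
  have ht : 0 < phi (1, t) by case: hp.
  rewrite (ch_change H hc (GB r) l1 E1 ht) (ch_change H hc (GB r') l2 E2 ht).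
  rewrite (ch_change H hc (GB (r + r')) l3 E3 ht) -mulrDr.
  congr (_ * _); apply: (ch_add H hc).
  + exact: (bd_ext H (GB r) l1 E1).
  + exact: (bd_ext H (GB r') l2 E2).
  + exact: (bd_ext H (GB (r + r')) l3 E3).
-
  move=> r r'; rewrite /gelfand /gelf_rep /approx /=.
  set s := gelf_s le r; set s' := gelf_s le r'; set s'' := gelf_s le (r * r').
  have ls : is_loc le s by exact: GL. have ls' : is_loc le s' by exact: GL.
  have ls'' : is_loc le s'' by exact: GL.
  set t := s * (s' * s'').
  have lt : is_loc le t by apply: (loc_mul H) => //; apply: (loc_mul H).
  exists (Oset le t); split; first by exists t; split; [first [done | exact: GL] | move=> ?; split].
  have E1 : s * (s' * s'') = t by [].
  have E2 : s' * (s * s'') = t by rewrite /t; ring.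
  have E3 : s'' * (s * s') = t by rewrite /t; ring.
  have l1 : is_loc le (s' * s'') by apply: (loc_mul H).
  have l2 : is_loc le (s * s'') by apply: (loc_mul H).
  have l3 : is_loc le (s * s') by apply: (loc_mul H).
  have pos : forall phi : R * R -> RR, Oset le t phi ->
    [/\ 0 < phi (1, s), 0 < phi (1, s') & 0 < phi (1, s'')].
    move=> phi [hc hp].
    have [p1 p23] := ch_split H hc ls l1 hp.
    have [p2 p3] := ch_split H hc ls' ls'' p23.
    by split.
  split.
    move=> phi hp; have [p1 p2 p3] := pos _ hp; case: hp => hc _; by split; [split|split; split].
  move=> phi hp; have hc : is_char le phi by case: hp.
  have ht : 0 < phi (1, t) by case: hp.
  rewrite (ch_change H hc (GB r) l1 E1 ht) (ch_change H hc (GB r') l2 E2 ht).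
  rewrite (ch_change H hc (GB (r * r')) l3 E3 ht).
  have b1 := bd_ext H (GB r) l1 E1.
  have b2 := bd_ext H (GB r') l2 E2.
  have b3 := bd_ext H (GB (r * r')) l3 E3.
  have Ett : phi (1, t * t) = phi (1, t) * phi (1, t).
    by rewrite -(chM hc (bd_one_loc H lt) (bd_one_loc H lt)) mulr1.
  have htt : 0 < phi (1, t * t) by rewrite Ett mulr_gt0.
  rewrite (ch_change H hc b3 lt erefl htt) Ett (chM hc b1 b2).
  by field; rewrite gt_eqF.
-
  move=> r hr; rewrite /gelfand /gelf_rep /dle /=; set s := gelf_s le r.
  exists (Oset le s); split; first by exists s; split; [first [done | exact: GL] | move=> ?; split].
  split; first by move=> phi hp; split => //; case: hp.
  move=> phi [hc hp]; apply: mulr_ge0; first by rewrite invr_ge0 ltW.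
  have [_ [_ [_ [_ [_ cp]]]]] := hc; apply: cp; first exact: GB.
  by rewrite /frac_le /= mul0r mulr1.
Qed.
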